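(* Let $(\Omega,+)$ be a group and $a,b$ subgroups with $a\top b$. Then $a^\top\cap{}^\top b=\{x\subseteq\Omega: a\top x,\ x\top b\}$ is stable under the ternary law $(x,y,z)\mapsto\Gamma(x,a,y,b,z)$ on the power set of $\Omega$, and with the induced law it is a torsor, denoted $U_{ab}$, which is naturally isomorphic (via left graphs $F\mapsto\{\alpha+F(\alpha):\alpha\in a\}$) to the torsor of all bijections $F:a\to b$ with torsor law $(XYZ)=Z\circ Y^{-1}\circ X$.
   Context: $(\Omega,+)$ is a group written additively but not necessarily abelian. For subsets $x,y$, $x\top y$ means every $\omega\in\Omega$ has a unique decomposition $\omega=\xi+\eta$ with $\xi\in x,\eta\in y$. $\Gamma(x,a,y,b,z)=\{\omega:\exists\alpha\in a,\beta\in b:\ \alpha+\omega+\beta\in y,\ \alpha+\omega\in z,\ \omega+\beta\in x\}$. A torsor is a set $G$ with a map $(x,y,z)\mapsto(xyz)$ such that $(xy(zuv))=(x(uzy)v)=((xyz)uv)$ and $(xxy)=y=(yxx)$ for all elements. *)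

(* Defs.v *)
(* Subsets of Omega are
   predicates [Omega -> Prop]; equality of subsets is Leibniz equality
   (with functional/propositional extensionality available). *)
From mathcomp Require Import ssreflect ssrfun ssrbool.

Set Implicit Arguments.
Unset Strict Implicit.

Section Defs.
Variable G : Type.

Record is_group (add : G -> G -> G) (opp : G -> G) (zero : G) : Prop := {
  grp_addA : forall x y z, add x (add y z) = add (add x y) z;
  grp_add0g : forall x, add zero x = x;
  grp_addg0 : forall x, add x zero = x;
  grp_addNg : forall x, add (opp x) x = zero;
  grp_addgN : forall x, add x (opp x) = zero }.

Definition is_subgroup (add : G -> G -> G) (opp : G -> G) (zero : G)
  (a : G -> Prop) : Prop :=
  a zero /\ (forall x y, a x -> a y -> a (add x y)) /\
  (forall x, a x -> a (opp x)).

Definition top (add : G -> G -> G) (x y : G -> Prop) : Prop :=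
  forall w, exists! p : G * G, x p.1 /\ y p.2 /\ w = add p.1 p.2.

Definition Gamma (add : G -> G -> G) (x a y b z : G -> Prop) : G -> Prop :=
  fun w => exists al be, a al /\ b be /\
    y (add (add al w) be) /\ z (add al w) /\ x (add w be).

Definition Uab (add : G -> G -> G) (a b : G -> Prop) (x : G -> Prop) : Prop :=
  top add a x /\ top add x b.

Definition left_graph (add : G -> G -> G) (a b : G -> Prop)
  (F : {w | a w} -> {w | b w}) : G -> Prop :=
  fun w => exists al : {w | a w}, w = add (proj1_sig al) (proj1_sig (F al)).

End Defs.

Definition is_torsor (T : Type) (P : T -> Prop) (m : T -> T -> T -> T) : Prop :=
  (forall x y z u v, P x -> P y -> P z -> P u -> P v ->
     m x y (m z u v) = m x (m u z y) v /\ m x (m u z y) v = m (m x y z) u v) /\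
  (forall x y, P x -> P y -> m x x y = y /\ y = m y x x).

(* Main.v *)
Require Import Defs.
From mathcomp Require Import ssreflect ssrfun ssrbool.
From Stdlib Require Import ProofIrrelevance FunctionalExtensionality PropExtensionality ClassicalEpsilon.

Lemma sig_eqS (T : Type) (P : T -> Prop) (x y : {w | P w}) :
  proj1_sig x = proj1_sig y -> x = y.
Proof. case: x => x px; case: y => y py /= E; subst y; by rewrite (proof_irrelevance _ px py). Qed.

Lemma gAddKl {T} {add : T -> T -> T} {opp zero} : is_group add opp zero ->
  forall x y, add (opp x) (add x y) = y.
Proof. move=> Hg x y; by rewrite (grp_addA Hg) (grp_addNg Hg) (grp_add0g Hg). Qed.
Lemma gAddNKl {T} {add : T -> T -> T} {opp zero} : is_group add opp zero ->
  forall x y, add x (add (opp x) y) = y.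
Proof. move=> Hg x y; by rewrite (grp_addA Hg) (grp_addgN Hg) (grp_add0g Hg). Qed.
Lemma gAddKr {T} {add : T -> T -> T} {opp zero} : is_group add opp zero ->
  forall x y, add (add y x) (opp x) = y.
Proof. move=> Hg x y; by rewrite -(grp_addA Hg) (grp_addgN Hg) (grp_addg0 Hg). Qed.
Lemma gAddNKr {T} {add : T -> T -> T} {opp zero} : is_group add opp zero ->
  forall x y, add (add y (opp x)) x = y.
Proof. move=> Hg x y; by rewrite -(grp_addA Hg) (grp_addNg Hg) (grp_addg0 Hg). Qed.

Lemma top_uniq {T} {add : T -> T -> T} {x y : T -> Prop} {a1 b1 a2 b2 : T} :
  top add x y -> x a1 -> y b1 -> x a2 -> y b2 -> add a1 b1 = add a2 b2 ->
  a1 = a2 /\ b1 = b2.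
Proof.
move=> H h1 h2 h3 h4 E.
have [p [_ U]] := H (add a1 b1).
have E1 := U (a1, b1) (conj h1 (conj h2 erefl)).
have E2 := U (a2, b2) (conj h3 (conj h4 E)).
rewrite E1 in E2. by case: E2.
Qed.

Lemma top_ex {T} {add : T -> T -> T} {x y : T -> Prop} : top add x y ->
  forall w, exists p1 p2, x p1 /\ y p2 /\ w = add p1 p2.
Proof. move=> H w; have [[p1 p2] [[h1 [h2 h3]] _]] := H w; by exists p1, p2. Qed.

Lemma lg_comp {T} {add : T -> T -> T} {opp zero} {a b : T -> Prop} :
  is_group add opp zero -> is_subgroup add opp zero a -> is_subgroup add opp zero b ->
  top add a b ->
  forall (X Y Z : {w | a w} -> {w | b w}) (Yi : {w | b w} -> {w | a w}),
  cancel Y Yi -> cancel Yi Y ->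
  left_graph add (Z \o Yi \o X) =
    Gamma add (left_graph add X) a (left_graph add Y) b (left_graph add Z).
Proof.
move=> Hg [a0 [aD aN]] [b0 [bD bN]] Hab X Y Z Yi cY cYi.
apply: functional_extensionality => w; apply: propositional_extensionality.
rewrite /Gamma /left_graph; split.
- case=> al ->{w} /=.
  have [g Hgd] : exists g, g = Yi (X al) by exists (Yi (X al)).
  rewrite -Hgd.
  exists (add (proj1_sig g) (opp (proj1_sig al))),
         (add (opp (proj1_sig (Z g))) (proj1_sig (X al))).
  have E1 : add (add (proj1_sig g) (opp (proj1_sig al)))
              (add (proj1_sig al) (proj1_sig (Z g)))
            = add (proj1_sig g) (proj1_sig (Z g)).
    by rewrite -(grp_addA Hg) (gAddKl Hg).
  split; first by apply: aD; [exact: proj2_sig | apply: aN; exact: proj2_sig].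
  split; first by apply: bD; [apply: bN; exact: proj2_sig | exact: proj2_sig].
  split; last split.
  + rewrite E1 -(grp_addA Hg) (gAddNKl Hg). exists g. by rewrite Hgd cYi.
  + rewrite E1; by exists g.
  + exists al. by rewrite -(grp_addA Hg) (gAddNKl Hg).
- case=> al [be [ha [hb [[a3 Hy] [[a2 Hz] [a1 Hx]]]]]].
  have Hy' := Hy. rewrite Hz -(grp_addA Hg) in Hy'.
  have [e1 _] := top_uniq Hab (proj2_sig a2) (bD _ _ (proj2_sig (Z a2)) hb)
     (proj2_sig a3) (proj2_sig (Y a3)) Hy'.
  rewrite -(grp_addA Hg) Hx (grp_addA Hg) in Hy.
  have [e3 e4] := top_uniq Hab (aD _ _ ha (proj2_sig a1)) (proj2_sig (X a1))
     (proj2_sig a3) (proj2_sig (Y a3)) Hy.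
  have eXY : X a1 = Y a3 by apply: sig_eqS.
  have ha3 : a3 = Yi (X a1) by rewrite eXY cY.
  have ha2 : a2 = a3 by apply: sig_eqS.
  exists a1.
  transitivity (add (opp al) (add al w)); first by rewrite (gAddKl Hg).
  rewrite Hz ha2 -e3 -(grp_addA Hg) (gAddKl Hg) ha3 //.
Qed.

Lemma lg_U {T} {add : T -> T -> T} {opp zero} {a b : T -> Prop} :
  is_group add opp zero -> is_subgroup add opp zero a -> is_subgroup add opp zero b ->
  top add a b ->
  forall F : {w | a w} -> {w | b w}, bijective F -> Uab add a b (left_graph add F).
Proof.
move=> Hg [a0 [aD aN]] [b0 [bD bN]] Hab F [g cF cg]; split.
- move=> w. have [p1 [p2 [h1 [h2 ->]]]] := top_ex Hab w.
  have [c Hc] : exists c, F c = exist b p2 h2 by exists (g (exist b p2 h2)); rewrite cg.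
  have Fc : proj1_sig (F c) = p2 by rewrite Hc.
  exists (add p1 (opp (proj1_sig c)), add (proj1_sig c) (proj1_sig (F c))); split.
  + split; first by apply: aD => //; apply: aN; exact: proj2_sig.
    split; first by exists c.
    by rewrite /= -(grp_addA Hg) (gAddKl Hg) Fc.
  + case=> q1 q2 /= [hq1 [[al ->] E]].
    rewrite (grp_addA Hg) in E.
    have [e1 e2] := top_uniq Hab h1 h2 (aD _ _ hq1 (proj2_sig al)) (proj2_sig (F al)) E.
    have eF : F al = F c by rewrite Hc; apply: sig_eqS.
    have hc : c = al by apply: (can_inj cF).
    by rewrite hc e1 (gAddKr Hg).
- move=> w. have [p1 [p2 [h1 [h2 ->]]]] := top_ex Hab w.
  exists (add p1 (proj1_sig (F (exist a p1 h1))),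
          add (opp (proj1_sig (F (exist a p1 h1)))) p2); split.
  + split; first by exists (exist a p1 h1).
    split; first by apply: bD => //; apply: bN; exact: proj2_sig.
    by rewrite /= -(grp_addA Hg) (gAddNKl Hg).
  + case=> q1 q2 /= [[al ->] [hq2 E]].
    rewrite -(grp_addA Hg) in E.
    have [e1 e2] := top_uniq Hab h1 h2 (proj2_sig al) (bD _ _ (proj2_sig (F al)) hq2) E.
    have -> : exist a p1 h1 = al by apply: sig_eqS.
    by rewrite e1 e2 (gAddKl Hg).
Qed.

Lemma lg_inj {T} {add : T -> T -> T} {opp zero} {a b : T -> Prop} :
  is_group add opp zero -> top add a b ->
  forall F F' : {w | a w} -> {w | b w},
  left_graph add F = left_graph add F' -> F = F'.
Proof.
move=> Hg Hab F F' E; apply: functional_extensionality => al.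
have : left_graph add F' (add (proj1_sig al) (proj1_sig (F al))) by rewrite -E; exists al.
case=> al' E'.
have [e1 e2] := top_uniq Hab (proj2_sig al) (proj2_sig (F al)) (proj2_sig al')
   (proj2_sig (F' al')) E'.
have eal : al = al' by apply: sig_eqS.
rewrite -eal in e2. by apply: sig_eqS.
Qed.

Lemma lg_surj {T} {add : T -> T -> T} {opp zero} {a b : T -> Prop} :
  is_group add opp zero -> is_subgroup add opp zero a -> is_subgroup add opp zero b ->
  top add a b ->
  forall x, Uab add a b x ->
  exists F : {w | a w} -> {w | b w}, bijective F /\ left_graph add F = x.
Proof.
move=> Hg [a0 [aD aN]] [b0 [bD bN]] Hab x [Hax Hxb].
have U1 : forall al b1 b2, b b1 -> b b2 -> x (add al b1) -> x (add al b2) -> b1 = b2.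
  move=> al b1 b2 hb1 hb2 h1 h2.
  have E : add (add al b1) (opp b1) = add (add al b2) (opp b2) by rewrite !(gAddKr Hg).
  have [e _] := top_uniq Hxb h1 (bN _ hb1) h2 (bN _ hb2) E.
  by rewrite -(gAddKl Hg al b1) e (gAddKl Hg).
have U2 : forall a1 a2 be, a a1 -> a a2 -> x (add a1 be) -> x (add a2 be) -> a1 = a2.
  move=> a1 a2 be ha1 ha2 h1 h2.
  have E : add (opp a1) (add a1 be) = add (opp a2) (add a2 be) by rewrite !(gAddKl Hg).
  have [_ e] := top_uniq Hax (aN _ ha1) h1 (aN _ ha2) h2 E.
  by rewrite -(gAddKr Hg be a1) e (gAddKr Hg).
have ExF : forall al : {w | a w}, exists be : {w | b w},
    x (add (proj1_sig al) (proj1_sig be)).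
  move=> [al hal] /=. have [p1 [p2 [h1 [h2 E]]]] := top_ex Hxb al.
  exists (exist b (opp p2) (bN _ h2)) => /=. by rewrite E (gAddKr Hg).
have ExG : forall be : {w | b w}, exists al : {w | a w},
    x (add (proj1_sig al) (proj1_sig be)).
  move=> [be hbe] /=. have [p1 [p2 [h1 [h2 E]]]] := top_ex Hax be.
  exists (exist a (opp p1) (aN _ h1)) => /=. by rewrite E (gAddKl Hg).
pose F := fun al => proj1_sig (constructive_indefinite_description _ (ExF al)).
have hF : forall al, x (add (proj1_sig al) (proj1_sig (F al))).
  move=> al; exact: (proj2_sig (constructive_indefinite_description _ (ExF al))).
pose Gi := fun be => proj1_sig (constructive_indefinite_description _ (ExG be)).
have hG : forall be, x (add (proj1_sig (Gi be)) (proj1_sig be)).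
  move=> be; exact: (proj2_sig (constructive_indefinite_description _ (ExG be))).
exists F; split.
- exists Gi.
  + move=> al; apply: sig_eqS.
    exact: (U2 _ _ (proj1_sig (F al)) (proj2_sig _) (proj2_sig _) (hG (F al)) (hF al)).
  + move=> be; apply: sig_eqS.
    exact: (U1 (proj1_sig (Gi be)) _ _ (proj2_sig _) (proj2_sig _) (hF (Gi be)) (hG be)).
- apply: functional_extensionality => w; apply: propositional_extensionality; split.
  + case=> al ->; exact: hF.
  + move=> hw; have [p1 [p2 [h1 [h2 E]]]] := top_ex Hab w.
    exists (exist a p1 h1); rewrite E /=.
    have -> : p2 = proj1_sig (F (exist a p1 h1)); last by [].
    apply: (U1 p1) => //; [exact: proj2_sig | by rewrite -E | exact: (hF (exist a p1 h1))].
Qed.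

Theorem theorem4p4 (Omega : Type) (add : Omega -> Omega -> Omega)
  (opp : Omega -> Omega) (zero : Omega)
  (a b : Omega -> Prop) :
  is_group add opp zero ->
  is_subgroup add opp zero a -> is_subgroup add opp zero b ->
  top add a b ->
  (* stability of U_ab under (x,y,z) |-> Gamma(x,a,y,b,z) *)
  (forall x y z, Uab add a b x -> Uab add a b y -> Uab add a b z ->
     Uab add a b (Gamma add x a y b z)) /\
  (* with the induced law, U_ab is a torsor *)
  is_torsor (Uab add a b) (fun x y z => Gamma add x a y b z) /\
  (* left graphs: a bijection from {bijections a -> b} onto U_ab ... *)
  (forall F : {w | a w} -> {w | b w}, bijective F ->
     Uab add a b (left_graph add F)) /\
  (forall F F' : {w | a w} -> {w | b w}, bijective F -> bijective F' ->
     left_graph add F = left_graph add F' -> F = F') /\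
  (forall x, Uab add a b x ->
     exists F : {w | a w} -> {w | b w}, bijective F /\ left_graph add F = x) /\
  (* ... which carries the law (XYZ) = Z o Y^-1 o X to Gamma *)
  (forall (X Y Z : {w | a w} -> {w | b w}) (Yi : {w | b w} -> {w | a w}),
     bijective X -> bijective Y -> bijective Z ->
     cancel Y Yi -> cancel Yi Y ->
     left_graph add (Z \o Yi \o X) =
       Gamma add (left_graph add X) a (left_graph add Y) b (left_graph add Z)).
Proof.
move=> Hg Ha Hb Hab.
have L5 := lg_comp Hg Ha Hb Hab.
have L2 := lg_U Hg Ha Hb Hab.
have L3 := lg_inj Hg Hab.
have L4 := lg_surj Hg Ha Hb Hab.
split.
  move=> x y z hx hy hz.
  have [X [bX <-]] := L4 _ hx. have [Y [[Yi cY cYi] <-]] := L4 _ hy.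
  have [Z [bZ <-]] := L4 _ hz.
  rewrite -(L5 X Y Z Yi cY cYi). apply: L2.
  apply: bij_comp => //; apply: bij_comp => //; exact: (Bijective cYi cY).
split.
  split.
  - move=> x y z u v hx hy hz hu hv /=.
    have [X [[Xi cX cXi] <-]] := L4 _ hx. have [Y [[Yi cY cYi] <-]] := L4 _ hy.
    have [Z [[Zi cZ cZi] <-]] := L4 _ hz. have [U [[Ui cU cUi] <-]] := L4 _ hu.
    have [V [[Vi cV cVi] <-]] := L4 _ hv.
    have c1 : cancel (Y \o Zi \o U) (Ui \o Z \o Yi).
      by move=> t /=; rewrite cY cZi cU.
    have c2 : cancel (Ui \o Z \o Yi) (Y \o Zi \o U).
      by move=> t /=; rewrite cUi cZ cYi.
    rewrite -(L5 Z U V Ui cU cUi) -(L5 U Z Y Zi cZ cZi) -(L5 X Y Z Yi cY cYi).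
    rewrite -(L5 X Y (V \o Ui \o Z) Yi cY cYi).
    rewrite -(L5 (Z \o Yi \o X) U V Ui cU cUi).
    rewrite -(L5 X (Y \o Zi \o U) V (Ui \o Z \o Yi) c1 c2).
    by split.
  - move=> x y hx hy /=.
    have [X [[Xi cX cXi] <-]] := L4 _ hx. have [Y [[Yi cY cYi] <-]] := L4 _ hy.
    rewrite -(L5 X X Y Xi cX cXi) -(L5 Y X X Xi cX cXi).
    have -> : Y \o Xi \o X = Y by apply: functional_extensionality => t /=; rewrite cX.
    have -> : X \o Xi \o Y = Y by apply: functional_extensionality => t /=; rewrite cXi.
    by split.
split; first exact: L2.
split; first by move=> F F' _ _; apply: L3.
split; first exact: L4.
by move=> X Y Z Yi _ _ _; apply: L5.
Qed.
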